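(* Let $p\ge5$ be prime and $f$ a modular form of weight $k$ on $\mathrm{SL}_2(\mathbb{Z})$ with integer Fourier coefficients. Then $D^{p^2}f$ is a modular form mod $p^2$; that is, the image of $D^{p^2}f\in\mathbb{Z}_{(p)}[P,Q,R]$ in $(\mathbb{Z}/p^2\mathbb{Z})[P,Q,R]$ lies in $(\mathbb{Z}/p^2\mathbb{Z})[Q,R]$.
   Context: $\mathbb{Z}_{(p)}$ is the localization of $\mathbb{Z}$ at $p$. $P=E_2,Q=E_4,R=E_6$ are the normalized Eisenstein series; quasimodular forms are identified with their unique polynomial expressions in $P,Q,R$, so $f\in\mathbb{Z}_{(p)}[Q,R]$. $D=q\frac{d}{dq}$ acts on $\mathbb{Z}_{(p)}[P,Q,R]$ as the derivation with $DP=\frac{P^2-Q}{12}$, $DQ=\frac{PQ-R}{3}$, $DR=\frac{PR-Q^2}{2}$. *)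

(* Defs.v *)
From HB Require Import structures.
From mathcomp Require Import all_boot all_order all_algebra.
From mathcomp Require Import mpoly.
Set Implicit Arguments. Unset Strict Implicit. Unset Printing Implicit Defensive.
Import Order.TTheory GRing.Theory Num.Theory.
Local Open Scope ring_scope.

(* Quasimodular forms are polynomials in P = E2, Q = E4, R = E6, i.e.
   elements of {mpoly rat[3]}; variable 0 is P, 1 is Q, 2 is R. *)
Definition vP : 'I_3 := @Ordinal 3 0 isT.
Definition vQ : 'I_3 := @Ordinal 3 1 isT.
Definition vR : 'I_3 := @Ordinal 3 2 isT.

(* The derivation D = q d/dq on Q[P,Q,R]:
   D g = dg/dP * (P^2 - Q)/12 + dg/dQ * (PQ - R)/3 + dg/dR * (PR - Q^2)/2. *)
Definition Dimg (i : 'I_3) : {mpoly rat[3]} :=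
  if i == vP then (12%:R)^-1 *: ('X_vP ^+ 2 - 'X_vQ)
  else if i == vQ then (3%:R)^-1 *: ('X_vP * 'X_vQ - 'X_vR)
  else (2%:R)^-1 *: ('X_vP * 'X_vR - 'X_vQ ^+ 2).

Definition Dq (g : {mpoly rat[3]}) : {mpoly rat[3]} :=
  \sum_(i < 3) mderiv i g * Dimg i.

Definition sigma (j m : nat) : nat := \sum_(d <- divisors m) d ^ j.

Definition Etrunc (c : int) (j N : nat) : {poly rat} :=
  1 + \sum_(1 <= m < N.+1) ((c%:~R * (sigma j m)%:R) *: 'X^m).

(* E2 = 1 - 24 sum sigma_1, E4 = 1 + 240 sum sigma_3, E6 = 1 - 504 sum sigma_5 *)
Definition Eis_trunc (N : nat) (i : 'I_3) : {poly rat} :=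
  if i == vP then Etrunc (-24) 1 N
  else if i == vQ then Etrunc 240 3 N
  else Etrunc (-504) 5 N.

Definition qcoef (g : {mpoly rat[3]}) (n : nat) : rat :=
  (mmap (@polyC rat) (Eis_trunc n) g)`_n.

Definition is_modform (k : nat) (g : {mpoly rat[3]}) : Prop :=
  forall m : 'X_{1..3}, m \in msupp g -> m vP = 0%N /\ (4 * m vQ + 6 * m vR)%N = k.

Definition in_Zp (p : nat) (x : rat) : bool := ~~ (p %| `|denq x|)%N.
Definition in_pZp (p e : nat) (x : rat) : bool :=
  in_Zp p x && (p ^ e %| `|numq x|)%N.

(* Main.v *)
Require Import Defs.
From mathcomp Require Import all_boot all_order all_algebra.
From mathcomp Require Import mpoly.
From mathcomp Require Import ring zify.
Import GRing.Theory Num.Theory.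
Local Open Scope ring_scope.

Lemma Zp_frac p (a d : int) : prime p -> ~~ (p %| `|d|)%N -> in_Zp p (a%:~R / d%:~R).
Proof.
move=> pp; rewrite /in_Zp; case: divqP => [|k x kn0].
  by rewrite dvdn0.
by rewrite abszM Euclid_dvdM // negb_or => /andP[].
Qed.

Lemma Zp_numden (x : rat) : x = (numq x)%:~R / (denq x)%:~R.
Proof. by rewrite divq_num_den. Qed.

Lemma Zp_ex p x : in_Zp p x -> exists a d : int, [/\ ~~ (p %| `|d|)%N, d != 0 & x = a%:~R / d%:~R].
Proof.
move=> h; exists (numq x), (denq x); split; [exact: h|exact: denq_neq0|].
exact: Zp_numden.
Qed.

Lemma ZpD p x y : prime p -> in_Zp p x -> in_Zp p y -> in_Zp p (x + y).
Proof.
move=> pp /Zp_ex[a [d [hd d0 ->]]] /Zp_ex[b [e [he e0 ->]]].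
have -> : a%:~R / d%:~R + b%:~R / e%:~R = (a * e + b * d)%:~R / (d * e)%:~R :> rat.
  rewrite !rmorphD !rmorphM /=; field.
  by rewrite !intr_eq0 d0 e0.
by apply: Zp_frac => //; rewrite abszM Euclid_dvdM // negb_or hd he.
Qed.

Lemma ZpM p x y : prime p -> in_Zp p x -> in_Zp p y -> in_Zp p (x * y).
Proof.
move=> pp /Zp_ex[a [d [hd d0 ->]]] /Zp_ex[b [e [he e0 ->]]].
have -> : a%:~R / d%:~R * (b%:~R / e%:~R) = (a * b)%:~R / (d * e)%:~R :> rat.
  rewrite !rmorphM /=; field.
  by rewrite !intr_eq0 d0 e0.
by apply: Zp_frac => //; rewrite abszM Euclid_dvdM // negb_or hd he.
Qed.

Lemma zp_int p (a : int) : prime p -> in_Zp p a%:~R.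
Proof.
move=> pp; have -> : a%:~R = a%:~R / (1%:~R) :> rat by rewrite divr1.
by apply: Zp_frac => //; rewrite dvdn1; case: eqP pp => // ->.
Qed.

Lemma ZpN p x : prime p -> in_Zp p x -> in_Zp p (- x).
Proof. by move=> pp h; rewrite -mulN1r; apply: ZpM => //; by move: (zp_int p (-1)%R pp); rewrite rmorphN1. Qed.

Lemma zp_nat p (n : nat) : prime p -> in_Zp p n%:R.
Proof. by move=> pp; exact: (zp_int p (n%:Z) pp). Qed.

Lemma Zp_inv_nat p (n : nat) : prime p -> ~~ (p %| n)%N -> in_Zp p (n%:R^-1).
Proof.
move=> pp h; have -> : n%:R^-1 = (1%:~R) / (n%:~R) :> rat by rewrite div1r.
exact: Zp_frac.
Qed.

Definition Zp2 p x := in_Zp p (x / ((p ^ 2)%N)%:R).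

Lemma Zp2D p x y : prime p -> Zp2 p x -> Zp2 p y -> Zp2 p (x + y).
Proof. by move=> pp hx hy; rewrite /Zp2 mulrDl; apply: ZpD. Qed.

Lemma Zp2M p x y : prime p -> Zp2 p x -> in_Zp p y -> Zp2 p (x * y).
Proof. by move=> pp hx hy; rewrite /Zp2 mulrAC; apply: ZpM. Qed.
Lemma Zp2_pZp p x : prime p -> Zp2 p x -> in_pZp p 2 x.
Proof.
move=> pp /Zp_ex[a [d [hd d0 hx]]].
have p0 : ((p ^ 2)%N)%:R != 0 :> rat by rewrite pnatr_eq0 -lt0n expn_gt0 prime_gt0.
have -> : x = ((p ^ 2)%N%:Z * a)%:~R / d%:~R.
  by rewrite rmorphM /= -mulrA -hx mulrC divfK // .
move En: ((p ^ 2)%N%:Z * a) => n.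
rewrite /in_pZp; move: En hd; case: divqP => [|k y kn0]; first by rewrite dvdn0.
move=> heq; rewrite abszM Euclid_dvdM // negb_or => /andP[hk hy].
rewrite /in_Zp hy /=.
have : (p ^ 2 %| `|(k * numq y)%R|)%N by rewrite -heq abszM /= dvdn_mulr.
rewrite abszM Gauss_dvdr //.
by rewrite coprimeXl // prime_coprime.
Qed.
Notation mp := {mpoly rat[3]}.

Lemma DqD (x y : mp) : Dq (x + y) = Dq x + Dq y.
Proof. by rewrite /Dq -big_split; apply: eq_bigr => i _; rewrite mderivD mulrDl. Qed.

Lemma DqZ c (x : mp) : Dq (c *: x) = c *: Dq x.
Proof. by rewrite /Dq scaler_sumr; apply: eq_bigr => i _; rewrite mderivZ scalerAl. Qed.

Lemma Dq0 : Dq 0 = 0.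
Proof. by rewrite /Dq big1 // => i _; rewrite mderiv0 mul0r. Qed.

Lemma DqN (x : mp) : Dq (- x) = - Dq x.
Proof. by rewrite -scaleN1r DqZ scaleN1r. Qed.

Lemma DqB (x y : mp) : Dq (x - y) = Dq x - Dq y.
Proof. by rewrite DqD DqN. Qed.

Lemma Dq_sum (I : Type) (r : seq I) (F : I -> mp) :
  Dq (\sum_(i <- r) F i) = \sum_(i <- r) Dq (F i).
Proof.
elim: r => [|a r IH]; first by rewrite !big_nil Dq0.
by rewrite !big_cons DqD IH.
Qed.

Lemma DqM (x y : mp) : Dq (x * y) = Dq x * y + x * Dq y.
Proof.
rewrite /Dq mulr_suml mulr_sumr -big_split; apply: eq_bigr => i _.
by rewrite mderivM mulrDl mulrAC mulrA.
Qed.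

Lemma DqC c : Dq (c%:MP : mp) = 0.
Proof. by rewrite /Dq big1 // => i _; rewrite mderivC mul0r. Qed.

Lemma DqX i : Dq ('X_i : mp) = Dimg i.
Proof.
rewrite /Dq (bigD1 i) //= big1 => [|j nij].
  rewrite mderivX mnm1E eqxx.
  have -> : (U_(i) - U_(i) = 0)%MM by apply/mnmP => j; rewrite !mnmE subnn.
  by rewrite mpolyX0 scale1r mul1r addr0.
by rewrite mderivX mnm1E eq_sym (negbTE nij) scale0r mul0r.
Qed.

Lemma DqXn (x : mp) n : Dq (x ^+ n.+1) = n.+1%:R *: (x ^+ n * Dq x).
Proof.
elim: n => [|n IH]; first by rewrite expr1 expr0 mul1r scale1r.
rewrite exprS DqM IH -!mul_mpolyC !mpolyC_nat !exprS.
rewrite !mulrS; ring.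
Qed.
Definition FS p (S : pred 'X_{1..3}) (h : mp) :=
  forall m, in_Zp p h@_m /\ (h@_m != 0 -> S m).

Definition valid (w : nat) : pred 'X_{1..3} :=
  fun m => (m vP == 0%N) && (4 * m vQ + 6 * m vR == w)%N.

Lemma FS0 p S : prime p -> FS p S 0.
Proof. by move=> pp m; rewrite mcoeff0 eqxx; split => //; move: (zp_nat p 0 pp); rewrite mulr0n. Qed.

Lemma FSD p S x y : prime p -> FS p S x -> FS p S y -> FS p S (x + y).
Proof.
move=> pp hx hy m; rewrite mcoeffD; have [h1 h2] := hx m; have [h3 h4] := hy m.
split; first exact: ZpD.
by case: (eqVneq x@_m 0) => [e|/h2 //]; rewrite e add0r.
Qed.

Lemma FSC p S c x : prime p -> in_Zp p c -> FS p S x -> FS p S (c%:MP * x).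
Proof.
move=> pp hc hx m; rewrite mcoeffCM; have [h1 h2] := hx m.
split; first exact: ZpM.
by case: (eqVneq x@_m 0) => [->|/h2 //]; rewrite mulr0 eqxx.
Qed.

Lemma FS_sum p S (I : Type) (r : seq I) (F : I -> mp) :
  prime p -> (forall i, FS p S (F i)) -> FS p S (\sum_(i <- r) F i).
Proof.
move=> pp h; elim: r => [|a r IH]; first by rewrite big_nil; exact: FS0.
by rewrite big_cons; apply: FSD.
Qed.

Lemma FS_sum_in p S (I : eqType) (r : seq I) (F : I -> mp) :
  prime p -> (forall i, i \in r -> FS p S (F i)) -> FS p S (\sum_(i <- r) F i).
Proof.
move=> pp; elim: r => [|a r IH] h; first by rewrite big_nil; exact: FS0.
rewrite big_cons; apply: FSD => //; first by apply: h; rewrite inE eqxx.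
by apply: IH => i hi; apply: h; rewrite inE hi orbT.
Qed.

Lemma FS_lin p (S S' : pred 'X_{1..3}) (phi : mp -> mp) (h : mp) : prime p ->
  (forall x y, phi (x + y) = phi x + phi y) ->
  (forall c x, phi (c%:MP * x) = c%:MP * phi x) ->
  (forall m, S m -> FS p S' (phi 'X_[m])) ->
  FS p S h -> FS p S' (phi h).
Proof.
move=> pp phiD phiC hX hh.
have phi0 : phi 0 = 0 by have := phiC 0 0; rewrite mpolyC0 !mul0r.
have phis : forall (r : seq 'X_{1..3}) (F : 'X_{1..3} -> mp),
    phi (\sum_(i <- r) F i) = \sum_(i <- r) phi (F i).
  move=> r F; elim: r => [|a r IH]; first by rewrite !big_nil.
  by rewrite !big_cons phiD IH.
rewrite (mpolyE h) phis; apply: FS_sum_in => // m hm.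
rewrite -mul_mpolyC phiC; apply: FSC => //; first by case: (hh m).
by apply: hX; case: (hh m) => _; apply; rewrite -mcoeff_msupp.
Qed.

Definition mono a b : mp := 'X_vQ ^+ a * 'X_vR ^+ b.
Definition mm a b : 'X_{1..3} := (U_(vQ) *+ a + U_(vR) *+ b)%MM.

Lemma mono_X a b : mono a b = 'X_[mm a b].
Proof. by rewrite /mono /mm mpolyXD !mpolyXn. Qed.

Lemma mmP a b : mm a b vP = 0%N /\ mm a b vQ = a /\ mm a b vR = b.
Proof. by rewrite /mm !mnmDE !mulmnE !mnm1E /= !mul0n ?mul1n ?addn0. Qed.

Lemma X_valid (m : 'X_{1..3}) : m vP = 0%N -> 'X_[m] = mono (m vQ) (m vR).
Proof.
move=> h0; rewrite mono_X; congr 'X_[_]; apply/mnmP => i.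
have [h1 [h2 h3]] := mmP (m vQ) (m vR).
case: i => [[|[|[|i]]] hi] //.
- by rewrite (_ : Ordinal hi = vP) ?h0 ?h1 //; apply/val_inj.
- by rewrite (_ : Ordinal hi = vQ) ?h2 //; apply/val_inj.
- by rewrite (_ : Ordinal hi = vR) ?h3 //; apply/val_inj.
Qed.

Lemma FS_mono p c a b : prime p -> in_Zp p c ->
  FS p (valid (4 * a + 6 * b)%N) (c%:MP * mono a b).
Proof.
move=> pp hc; apply: FSC => // m; rewrite mono_X mcoeffX.
split; first exact: zp_nat.
have [<-|_] := eqVneq (mm a b) m; last by rewrite eqxx.
move=> _.
have [h1 [h2 h3]] := mmP a b.
by rewrite /valid h1 h2 h3 !eqxx.
Qed.

Definition e12 : mp := ((12%:R : rat)^-1)%:MP.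
Definition th (w : nat) (h : mp) := Dq h - (w%:R * e12) * ('X_vP * h).

Lemma DimgP : Dimg vP = e12 * ('X_vP ^+ 2 - 'X_vQ).
Proof. by rewrite /Dimg /= -mul_mpolyC. Qed.

Lemma DimgQ : Dimg vQ = 4 * e12 * ('X_vP * 'X_vQ - 'X_vR).
Proof.
rewrite /Dimg /= -mul_mpolyC; congr (_ * _).
by rewrite /e12 -mpolyC_nat -mpolyCM; congr mpolyC.
Qed.

Lemma DimgR : Dimg vR = 6 * e12 * ('X_vP * 'X_vR - 'X_vQ ^+ 2).
Proof.
rewrite /Dimg /= -mul_mpolyC; congr (_ * _).
by rewrite /e12 -mpolyC_nat -mpolyCM; congr mpolyC.
Qed.

Lemma Dq1 : Dq 1 = 0.
Proof. by rewrite -mpolyC1 DqC. Qed.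

Lemma th_mono a b : th (4 * a + 6 * b)%N (mono a b) =
  - (4 * a%:R * e12) * mono a.-1 b.+1 - (6 * b%:R * e12) * mono a.+2 b.-1.
Proof.
rewrite /th /mono !natrD.
case: a => [|a]; case: b => [|b] /=;
  rewrite ?expr0 ?mul1r ?mulr1 ?Dq1 ?DqM ?DqXn ?DqX ?DimgQ ?DimgR ?Dq1 -?mul_mpolyC ?mpolyC_nat ?exprS;
  ring.
Qed.

Lemma p12 p : prime p -> (5 <= p)%N -> ~~ (p %| 12)%N.
Proof.
move=> pp p5; rewrite (_ : 12 = 2 * 2 * 3)%N // !Euclid_dvdM //.
by rewrite !gtnNdvd //; apply: leq_trans p5.
Qed.

Lemma FS_monoC p c a b w : prime p -> in_Zp p c -> (c != 0 -> (4 * a + 6 * b)%N = w) ->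
  FS p (valid w) (c%:MP * mono a b).
Proof.
move=> pp hc hw; have [->|cn0] := eqVneq c 0.
  by rewrite mpolyC0 mul0r; exact: FS0.
by rewrite -(hw cn0); exact: FS_mono.
Qed.

Lemma FS_th p w h : prime p -> (5 <= p)%N -> FS p (valid w) h -> FS p (valid (w + 2)) (th w h).
Proof.
move=> pp p5; apply: FS_lin => //.
- by move=> x y; rewrite /th DqD; ring.
- by move=> c x; rewrite /th DqM DqC mul0r add0r; ring.
move=> m /andP[/eqP h0 /eqP hw]; rewrite X_valid // -hw th_mono.
have h12 : in_Zp p (12%:R^-1) by apply: Zp_inv_nat => //; exact: p12.
rewrite /e12 -!mpolyC_nat -!mpolyCM -mpolyCN; apply: FSD => //.
  apply: FS_monoC => //.
    by apply: ZpN => //; apply: ZpM => //; apply: ZpM => //; apply: zp_nat.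
  by case: (m vQ) => [|a]; [rewrite mulr0 mul0r oppr0 eqxx|move=> _; lia].
rewrite -mulNr -mpolyCN; apply: FS_monoC => //.
  by apply: ZpN => //; apply: ZpM => //; apply: ZpM => //; apply: zp_nat.
by case: (m vR) => [|a]; [rewrite mulr0 mul0r oppr0 eqxx|move=> _; lia].
Qed.

Lemma FS_Q p w h : prime p -> FS p (valid w) h -> FS p (valid (w + 4)) ('X_vQ * h).
Proof.
move=> pp; apply: (@FS_lin p _ _ (fun x => 'X_vQ * x) h) => //.
- by move=> x y; rewrite mulrDr.
- by move=> c x; rewrite mulrCA.
move=> m /andP[/eqP h0 /eqP hw] /=; rewrite (@X_valid m h0).
rewrite (_ : 'X_vQ * mono _ _ = 1%:MP * mono (m vQ).+1 (m vR)); last first.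
  by rewrite mpolyC1 mul1r /mono exprS mulrA.
by apply: FS_monoC => //; [exact: (zp_nat p 1)|move=> _; lia].
Qed.
Definition ffr (x : rat) (j : nat) : rat := \prod_(i < j) (x - i%:R).
Definition cf (k n j : nat) : rat := 'C(n, j)%:R * ffr (k%:R + n%:R - 1) j.

Lemma cf0 k n : cf k n 0 = 1.
Proof. by rewrite /cf bin0 /ffr big_ord0 mulr1. Qed.

Lemma cf_big k n j : (n < j)%N -> cf k n j = 0.
Proof. by move=> h; rewrite /cf bin_small // mul0r. Qed.

Lemma ffrS x j : ffr x j.+1 = ffr x j * (x - j%:R).
Proof. by rewrite /ffr big_ord_recr. Qed.

Lemma ffrSl x j : ffr (x + 1) j.+1 = (x + 1) * ffr x j.
Proof.
rewrite /ffr big_ord_recl /= subr0; congr (_ * _); apply: eq_bigr => i _.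
by rewrite /bump /= add1n -addn1 natrD; ring.
Qed.

Lemma binrel n j : (j <= n)%N ->
  'C(n, j.+1)%:R * j.+1%:R = 'C(n, j)%:R * (n%:R - j%:R) :> rat.
Proof.
move=> h; rewrite -natrB // -!natrM; congr (_%:R).
by rewrite mulnC mul_bin_left mulnC.
Qed.

Lemma cfS k n j : (j <= n)%N ->
  cf k n.+1 j.+1 = cf k n j.+1 + cf k n j * (j%:R + (k + 2 * (n - j))%N%:R).
Proof.
move=> h; rewrite /cf binS natrD.
have -> : k%:R + n.+1%:R - 1 = (k%:R + n%:R - 1) + 1 :> rat by rewrite -addn1 natrD; ring.
rewrite ffrSl ffrS natrD natrM natrB //.
have hb := @binrel n j h.
apply/eqP; rewrite -subr_eq0; apply/eqP.
transitivity (ffr (k%:R + n%:R - 1) j * ('C(n, j.+1)%:R * j.+1%:R - 'C(n, j)%:R * (n%:R - j%:R))).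
  rewrite -addn1 natrD; ring.
by rewrite hb subrr mulr0.
Qed.

Lemma cfD k n j : (j < n)%N ->
  cf k n j.+1 * j.+1%:R = cf k n j * ((n - j)%N%:R * (k%:R + (n - j)%N%:R - 1)).
Proof.
move=> h; rewrite /cf ffrS natrB ?(ltnW h) //.
have hb := @binrel n j (ltnW h).
apply/eqP; rewrite -subr_eq0; apply/eqP.
transitivity (ffr (k%:R + n%:R - 1) j * (k%:R + n%:R - 1 - j%:R) *
   ('C(n, j.+1)%:R * j.+1%:R - 'C(n, j)%:R * (n%:R - j%:R))).
  ring.
by rewrite hb subrr mulr0.
Qed.

Definition dco (k m : nat) : rat := m%:R * (k%:R + m%:R - 1).

Fixpoint Gp (k : nat) (f : mp) (m : nat) : mp * mp :=
  match m with
  | 0 => (f, 0)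
  | m'.+1 => let ab := Gp k f m' in
      (th (k + 2 * m') ab.1 - (dco k m')%:MP * e12 ^+ 2 * ('X_vQ * ab.2), ab.1)
  end.

Definition G k f m := (Gp k f m).1.

Lemma GS k f m : G k f m.+1 =
  th (k + 2 * m) (G k f m) - (dco k m)%:MP * e12 ^+ 2 * ('X_vQ * G k f m.-1).
Proof.
case: m => [|m] //.
by rewrite /G /= /dco !mul0r ?mpolyC0 ?mul0r ?subr0.
Qed.

Lemma G0 k f : G k f 0 = f.
Proof. by []. Qed.

Lemma DqG k f m : Dq (G k f m) = G k f m.+1 + (k + 2 * m)%N%:R * e12 * ('X_vP * G k f m)
  + (dco k m)%:MP * e12 ^+ 2 * ('X_vQ * G k f m.-1).
Proof. rewrite GS /th; ring. Qed.

Lemma e12X j : e12 ^+ j = (((12%:R : rat)^-1) ^+ j)%:MP.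
Proof. by rewrite /e12 rmorphXn. Qed.

Lemma DqCm c x : Dq (c%:MP * x) = c%:MP * Dq x.
Proof. by rewrite DqM DqC mul0r add0r. Qed.

Lemma Dq_e j x : Dq (e12 ^+ j * x) = e12 ^+ j * Dq x.
Proof. by rewrite e12X DqCm. Qed.

Lemma DqPn j : Dq ('X_vP ^+ j) = j%:R * e12 * ('X_vP ^+ j.+1 - 'X_vQ * 'X_vP ^+ j.-1).
Proof.
case: j => [|j]; first by rewrite expr0 Dq1 mul0r mul0r.
rewrite DqXn DqX DimgP -mul_mpolyC mpolyC_nat /= !exprS; ring.
Qed.

Lemma Dq_term k f n j : (j <= n)%N ->
  Dq ((cf k n j)%:MP * e12 ^+ j * ('X_vP ^+ j * G k f (n - j))) =
    (cf k n j)%:MP * (j%:R + (k + 2 * (n - j))%N%:R) * e12 ^+ j.+1 * ('X_vP ^+ j.+1 * G k f (n - j))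
  + (cf k n j)%:MP * e12 ^+ j * ('X_vP ^+ j * G k f (n.+1 - j))
  - (cf k n j)%:MP * j%:R * e12 ^+ j.+1 * ('X_vQ * 'X_vP ^+ j.-1 * G k f (n - j))
  + (cf k n j)%:MP * (dco k (n - j))%:MP * e12 ^+ j.+2 * ('X_vQ * 'X_vP ^+ j * G k f (n - j).-1).
Proof.
move=> h; rewrite -mulrA DqCm Dq_e DqM DqPn DqG subSn // !exprS; ring.
Qed.

Definition term k f n j := (cf k n j)%:MP * e12 ^+ j * ('X_vP ^+ j * G k f (n - j)).

Lemma closed k f n : iter n Dq f = \sum_(0 <= j < n.+1) term k f n j.
Proof.
elim: n => [|n IH].
  by rewrite big_nat1 /term cf0 mpolyC1 !expr0 !mul1r subnn G0.
rewrite iterS IH Dq_sum.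
set A := fun j => (cf k n j)%:MP * (j%:R + (k + 2 * (n - j))%N%:R) * e12 ^+ j.+1 * ('X_vP ^+ j.+1 * G k f (n - j)).
set B := fun j => (cf k n j)%:MP * e12 ^+ j * ('X_vP ^+ j * G k f (n.+1 - j)).
set C := fun j => (cf k n j)%:MP * j%:R * e12 ^+ j.+1 * ('X_vQ * 'X_vP ^+ j.-1 * G k f (n - j)).
set D := fun j => (cf k n j)%:MP * (dco k (n - j))%:MP * e12 ^+ j.+2 * ('X_vQ * 'X_vP ^+ j * G k f (n - j).-1).
set B' := fun j => (cf k n j.+1)%:MP * e12 ^+ j.+1 * ('X_vP ^+ j.+1 * G k f (n - j)).
have E1 : \sum_(0 <= j < n.+1) Dq (term k f n j) = \sum_(0 <= j < n.+1) (A j + B j - C j + D j).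
  by apply: eq_big_nat => j /andP[_ hj]; rewrite /term Dq_term.
have EC : \sum_(0 <= j < n.+1) C j = \sum_(0 <= j < n) C j.+1.
  by rewrite big_nat_recl // [C 0%N]/C mulr0n mulr0 !mul0r add0r.
have ED : \sum_(0 <= j < n.+1) D j = \sum_(0 <= j < n) D j.
  by rewrite big_nat_recr //= {2}/D subnn /dco mul0r mpolyC0 mulr0 !mul0r addr0.
have ECD : \sum_(0 <= j < n) C j.+1 = \sum_(0 <= j < n) D j.
  apply: eq_big_nat => j /andP[_ hj]; rewrite /C /D subnS -mpolyC_nat -!mpolyCM cfD //.
have EB : \sum_(0 <= j < n.+1) B j = B 0%N + \sum_(0 <= j < n.+1) B' j.
  rewrite big_nat_recl // big_nat_recr //= [B' n]/B' cf_big // mpolyC0 !mul0r addr0.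
  by congr (_ + _).
have ET : \sum_(0 <= j < n.+2) term k f n.+1 j = B 0%N + \sum_(0 <= j < n.+1) (B' j + A j).
  rewrite big_nat_recl // /term /B !cf0 !subn0; congr (_ + _).
  apply: eq_big_nat => j /andP[_ hj]; rewrite /A /B' subSS cfS // mpolyCD mpolyCM -mpolyC_nat.
  ring.
rewrite E1 !big_split /= sumrN EC ED ECD ET EB big_split /=; ring.
Qed.
Lemma FSB p S x y : prime p -> FS p S x -> FS p S y -> FS p S (x - y).
Proof.
move=> pp hx hy; apply: FSD => //; rewrite -mulN1r -mpolyC1 -mpolyCN.
by apply: FSC => //; move: (zp_int p (-1) pp); rewrite rmorphN1.
Qed.

Lemma FS_w p w w' x : FS p (valid w) x -> w = w' -> FS p (valid w') x.
Proof. by move=> h <-. Qed.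

Lemma ZpX p x j : prime p -> in_Zp p x -> in_Zp p (x ^+ j).
Proof.
move=> pp hx; elim: j => [|j IH]; first by move: (zp_nat p 1 pp).
by rewrite exprS; apply: ZpM.
Qed.

Lemma Z12 p : prime p -> (5 <= p)%N -> in_Zp p ((12%:R : rat)^-1).
Proof. by move=> pp p5; apply: Zp_inv_nat => //; exact: p12. Qed.

Lemma FS_G p k f : prime p -> (5 <= p)%N -> FS p (valid k) f ->
  forall m, FS p (valid (k + 2 * m)) (G k f m).
Proof.
move=> pp p5 hf.
suff H : forall m, FS p (valid (k + 2 * m)) (G k f m) /\ FS p (valid (k + 2 * m.+1)) (G k f m.+1).
  by move=> m; case: (H m).
elim=> [|m [IH1 IH2]].
  split; first by rewrite muln0 addn0.
  rewrite GS /dco mul0r mpolyC0 !mul0r subr0 /= !muln0 !addn0 G0.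
  by apply: (FS_w _ _ _ _ (FS_th _ _ _ pp p5 hf)); rewrite ?muln0 ?addn0.
split => //.
rewrite GS /=; apply: FSB => //.
  by apply: (FS_w _ _ _ _ (FS_th _ _ _ pp p5 IH2)); lia.
rewrite e12X -mpolyCM; apply: FSC => //.
  apply: ZpM => //; last by apply: ZpX => //; exact: Z12.
  by rewrite /dco; apply: ZpM => //; [apply: zp_nat | apply: ZpD => //; [apply: ZpD => //; apply: zp_nat | apply: ZpN => //; apply: (zp_nat p 1 pp)]].
by apply: (FS_w _ _ _ _ (FS_Q _ _ _ pp IH1)); lia.
Qed.

Lemma Zp2_sum_nat p N (F : nat -> rat) : prime p ->
  (forall j, (j < N)%N -> Zp2 p (F j)) -> Zp2 p (\sum_(0 <= j < N) F j).
Proof.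
move=> pp; elim: N => [|N IH] h.
  by rewrite big_nil /Zp2 mul0r; move: (zp_nat p 0 pp).
rewrite big_nat_recr //=; apply: Zp2D => //; first by apply: IH => j hj; apply: h; lia.
by apply: h.
Qed.

Lemma FS_sum_nat p S N (F : nat -> mp) : prime p ->
  (forall j, (j < N)%N -> FS p S (F j)) -> FS p S (\sum_(0 <= j < N) F j).
Proof.
move=> pp; elim: N => [|N IH] h; first by rewrite big_nil; exact: FS0.
rewrite big_nat_recr //=; apply: FSD => //; first by apply: IH => j hj; apply: h; lia.
by apply: h.
Qed.

Lemma FS_X p (S : pred 'X_{1..3}) m : prime p -> S m -> FS p S 'X_[m].
Proof.
move=> pp hS m'; rewrite mcoeffX; split; first exact: zp_nat.
by have [<- //|_] := eqVneq m m'; rewrite eqxx.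
Qed.

Lemma FS_Pj p w h j : prime p -> FS p (valid w) h -> FS p (fun _ => true) ('X_vP ^+ j * h).
Proof.
move=> pp; apply: (@FS_lin p _ _ (fun x => 'X_vP ^+ j * x) h) => //.
- by move=> x y; rewrite mulrDr.
- by move=> c x; rewrite mulrCA.
by move=> m _ /=; rewrite mpolyXn -mpolyXD; apply: FS_X.
Qed.

Lemma Zp_ffr p x j : prime p -> in_Zp p x -> in_Zp p (ffr x j).
Proof.
move=> pp hx; rewrite /ffr; elim: j => [|j IH]; first by rewrite big_ord0; move: (zp_nat p 1 pp).
by rewrite big_ord_recr /=; apply: ZpM => //; apply: ZpD => //; apply: ZpN => //; apply: zp_nat.
Qed.

Lemma Zp_cf p k n j : prime p -> in_Zp p (cf k n j).
Proof.
move=> pp; rewrite /cf; apply: ZpM => //; first exact: zp_nat.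
apply: Zp_ffr => //; apply: ZpD => //; first by apply: ZpD => //; apply: zp_nat.
by apply: ZpN => //; move: (zp_nat p 1 pp).
Qed.

Lemma cf_nat k n j : (0 < n)%N -> (j <= n)%N -> cf k n j = ('C(n, j) * (k + n - 1) ^_ j)%N%:R.
Proof.
move=> n0 jn; rewrite /cf natrM; congr (_ * _).
have -> : k%:R + n%:R - 1 = (k + n - 1)%N%:R :> rat by rewrite natrB; [rewrite natrD|lia].
rewrite ffact_prod natr_prod /ffr; apply: eq_bigr => i _.
have hi := ltn_ord i.
by rewrite [RHS]natrB; last lia.
Qed.

Lemma dvd_cf n y j : (0 < j)%N -> (n %| 'C(n, j) * y ^_ j)%N.
Proof.
case: j => [|j] // _.
rewrite -bin_ffact factS.
have -> : ('C(n, j.+1) * ('C(y, j.+1) * (j.+1 * j`!)) =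
    n * ('C(n.-1, j) * ('C(y, j.+1) * j`!)))%N.
  by rewrite !mulnA mul_bin_diag; ring.
exact: dvdn_mulr.
Qed.


Theorem lemma3p10 (p k : nat) (f : {mpoly rat[3]}) :
  prime p -> (5 <= p)%N ->
  is_modform k f ->
  (forall n : nat, qcoef f n \is a Num.int) ->
  (forall m : 'X_{1..3}, in_Zp p f@_m) ->
  let g := iter (p ^ 2) Dq f in
  (forall m : 'X_{1..3}, in_Zp p g@_m) /\
  (forall m : 'X_{1..3}, (0 < m vP)%N -> in_pZp p 2 g@_m).
Proof.
move=> pp p5 hmod _ hZ g.
have hf : FS p (valid k) f.
  move=> m; split => // hm.
  have := hmod m; rewrite mcoeff_msupp => /(_ hm) [h0 hw].
  by rewrite /valid h0 hw !eqxx.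
have hG := FS_G p k f pp p5 hf.
set n := (p ^ 2)%N.
have n0 : (0 < n)%N by rewrite expn_gt0 prime_gt0.
have Eg : g = \sum_(0 <= j < n.+1)
    (cf k n j * ((12%:R : rat)^-1) ^+ j)%:MP * ('X_vP ^+ j * G k f (n - j)).
  rewrite /g (closed k); apply: eq_big_nat => j _; by rewrite /term e12X [in RHS]mpolyCM.
split.
  move=> m; suff H : FS p (fun _ => true) g by case: (H m).
  rewrite Eg; apply: FS_sum_nat => // j _; apply: FSC => //.
    by apply: ZpM => //; [exact: Zp_cf | apply: ZpX => //; exact: Z12].
  exact: (FS_Pj _ _ _ _ pp (hG _)).
move=> m hm; apply: Zp2_pZp => //; rewrite Eg raddf_sum.
apply: Zp2_sum_nat => // j hj; rewrite /= mcoeffCM.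
case: j hj => [|j] hj.
  rewrite cf0 !expr0 mulr1 mul1r mul1r subn0.
  have [e|ne] := eqVneq (G k f n)@_m 0.
    by rewrite e /Zp2 mul0r; move: (zp_nat p 0 pp).
  have := (hG n m).2 ne; rewrite /valid => /andP[/eqP h0 _].
  by rewrite h0 in hm.
apply: Zp2M => //; last by case: (FS_Pj _ _ _ j.+1 pp (hG (n - j.+1)%N) m).
rewrite cf_nat //; have := @dvd_cf n (k + n - 1) j.+1 isT => /dvdnP [q ->].
rewrite /Zp2 natrM.
have -> : q%:R * n%:R * ((12%:R : rat)^-1) ^+ j.+1 / n%:R = q%:R * ((12%:R : rat)^-1) ^+ j.+1.
  by field; rewrite pnatr_eq0 -lt0n.
by apply: ZpM => //; [exact: zp_nat | apply: ZpX => //; exact: Z12].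
Qed.
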